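(* Let $n>2$ be an integer and fix $a\in\mathbb{R}$ and $b\in\mathbb{R}$ with $b\ne0$. For $c\in\mathbb{R}$ define \[\lambda_\pm(c)=\tfrac12\Bigl(2a-(n-1)c\pm\sqrt{\bigl(2a+(n+1)c\bigr)^2+4nb^2}\Bigr)\] (these are the two eigenvalues $\lambda_\pm$ of the matrix $m_n(a,b,c)$ described in the context) and $\lambda_{\mathrm{sep}}(c)=c+2a$. Then: (a) $c\mapsto\lambda_+(c)$ is strictly convex and $c\mapsto\lambda_-(c)$ is strictly concave on $\mathbb{R}$; (b) $\lambda_-(c)<\lambda_{\mathrm{sep}}(c)<\lambda_+(c)$ for every $c\in\mathbb{R}$ (so the three graphs have no common points), and the line $\lambda=c+2a$ is an asymptote of $\lambda=\lambda_+(c)$ as $c\to+\infty$ and of $\lambda=\lambda_-(c)$ as $c\to-\infty$; (c) the line $\lambda=-nc$ (independent of $a$) is the other asymptote of the curves $\lambda=\lambda_\pm(c)$ (namely of $\lambda_+$ as $c\to-\infty$ and of $\lambda_-$ as $c\to+\infty$).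
   Context: For $n>2$ and real $a,b,c$, $m_n(a,b,c)$ is the $(n+1)\times(n+1)$ symmetric matrix with rows/columns indexed $0,\dots,n$, $(0,0)$-entry $-nc$, $(0,j)$- and $(j,0)$-entries $b$ ($j=1,\dots,n$), and lower-right block the circulant $\mathrm{circ}(c,a,0,\dots,0,a)$ (diagonal $c$, entries $a$ at positions $(j,j\pm1 \bmod n)$, zeros elsewhere). *)

(* Defs.v *)
From Stdlib Require Import Reals.
From Coquelicot Require Import Coquelicot.
Open Scope R_scope.

Definition lam_plus (n : nat) (a b c : R) : R :=
  / 2 * (2 * a - (INR n - 1) * c + sqrt ((2 * a + (INR n + 1) * c) ^ 2 + 4 * INR n * b ^ 2)).

Definition lam_minus (n : nat) (a b c : R) : R :=
  / 2 * (2 * a - (INR n - 1) * c - sqrt ((2 * a + (INR n + 1) * c) ^ 2 + 4 * INR n * b ^ 2)).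

Definition lam_sep (a c : R) : R := c + 2 * a.

Definition strictly_convex (f : R -> R) : Prop :=
  forall x y t, x <> y -> 0 < t < 1 ->
    f (t * x + (1 - t) * y) < t * f x + (1 - t) * f y.

Definition strictly_concave (f : R -> R) : Prop :=
  forall x y t, x <> y -> 0 < t < 1 ->
    t * f x + (1 - t) * f y < f (t * x + (1 - t) * y).

Definition asymptote_at (f l : R -> R) (x : Rbar) : Prop :=
  is_lim (fun c => f c - l c) x 0.

(* Main.v *)
Require Import Defs.
From Stdlib Require Import Reals Lra.
From Coquelicot Require Import Coquelicot.
Open Scope R_scope.

Lemma sqrt_lt_of (X Y : R) : 0 <= X -> 0 < Y -> X < Y ^ 2 -> sqrt X < Y.
Proof.
  intros hX hY h. rewrite <- (sqrt_pow2 Y) by lra. apply sqrt_lt_1_alt. lra.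
Qed.

Lemma sqrt_gt_abs (u D : R) : 0 < D -> Rabs u < sqrt (u ^ 2 + D).
Proof.
  intros hD. rewrite <- (sqrt_pow2 (Rabs u)) by apply Rabs_pos.
  apply sqrt_lt_1_alt. split. apply pow2_ge_0.
  rewrite pow2_abs. lra.
Qed.

Lemma key_small (v D eps : R) : 0 < D -> 0 < v -> D < v * eps -> 0 < eps ->
  0 < sqrt (v ^ 2 + D) - v < eps.
Proof.
  intros hD hv hve he. split.
  - pose proof (sqrt_gt_abs v D hD). rewrite Rabs_right in H by lra. lra.
  - assert (sqrt (v^2 + D) < v + eps). apply sqrt_lt_of. nra. lra. nra. lra.
Qed.

Lemma lim_pinf (h : R -> R) (k0 a0 D s : R) : 0 < k0 -> 0 < D -> Rabs s <= 1 ->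
  (forall c, h c = s * (sqrt ((a0 + k0 * c) ^ 2 + D) - (a0 + k0 * c))) ->
  is_lim h p_infty 0.
Proof.
  intros hk hD hs hh. apply is_lim_spec. intros eps. simpl.
  pose proof (cond_pos eps) as he.
  assert (0 < D / eps) by (apply Rdiv_lt_0_compat; lra).
  exists ((D / eps + 1 + Rabs a0) / k0). intros c hc.
  assert (hu : D / eps + 1 < a0 + k0 * c).
  { apply Rmult_lt_compat_l with (r := k0) in hc; [|lra].
    assert (k0 * ((D / eps + 1 + Rabs a0) / k0) = D / eps + 1 + Rabs a0) by (field; lra).
    pose proof (Rle_abs (-a0)) as ha. rewrite Rabs_Ropp in ha. lra. }
  assert (hde : D < (a0 + k0 * c) * eps).
  { assert (D / eps * eps = D) by (field; lra).
    assert (0 < D / eps) by (apply Rdiv_lt_0_compat; lra). nra. }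
  destruct (key_small (a0 + k0 * c) D eps hD) as [h1 h2]; try lra.
  rewrite Rminus_0_r, hh, Rabs_mult.
  rewrite (Rabs_right (_ - _)) by lra.
  pose proof (Rabs_pos s). nra.
Qed.

Lemma lim_minf (h : R -> R) (k0 a0 D s : R) : 0 < k0 -> 0 < D -> Rabs s <= 1 ->
  (forall c, h c = s * (sqrt ((a0 + k0 * c) ^ 2 + D) + (a0 + k0 * c))) ->
  is_lim h m_infty 0.
Proof.
  intros hk hD hs hh. apply is_lim_spec. intros eps. simpl.
  pose proof (cond_pos eps) as he.
  assert (0 < D / eps) by (apply Rdiv_lt_0_compat; lra).
  exists (- (D / eps + 1 + Rabs a0) / k0). intros c hc.
  assert (hu : D / eps + 1 < - (a0 + k0 * c)).
  { apply Rmult_lt_compat_l with (r := k0) in hc; [|lra].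
    assert (k0 * (- (D / eps + 1 + Rabs a0) / k0) = - (D / eps + 1 + Rabs a0)) by (field; lra).
    pose proof (Rle_abs a0). lra. }
  assert (hde : D < (- (a0 + k0 * c)) * eps).
  { assert (D / eps * eps = D) by (field; lra).
    assert (0 < D / eps) by (apply Rdiv_lt_0_compat; lra). nra. }
  destruct (key_small (- (a0 + k0 * c)) D eps hD) as [h1 h2]; try lra.
  replace ((- (a0 + k0 * c)) ^ 2) with ((a0 + k0 * c) ^ 2) in h1, h2 by ring.
  rewrite Rminus_0_r, hh, Rabs_mult.
  rewrite (Rabs_right (_ + _)) by lra.
  pose proof (Rabs_pos s). nra.
Qed.

Lemma sq_convex (u v t D : R) : 0 < D -> u <> v -> 0 < t < 1 ->
  sqrt ((t * u + (1 - t) * v) ^ 2 + D) < t * sqrt (u ^ 2 + D) + (1 - t) * sqrt (v ^ 2 + D).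
Proof.
  intros hD huv ht.
  assert (hu : 0 <= u ^ 2 + D) by (pose proof (pow2_ge_0 u); lra).
  assert (hv : 0 <= v ^ 2 + D) by (pose proof (pow2_ge_0 v); lra).
  pose proof (sqrt_sqrt _ hu) as Su2. pose proof (sqrt_sqrt _ hv) as Sv2.
  pose proof (sqrt_gt_abs u D hD) as Su. pose proof (sqrt_gt_abs v D hD) as Sv.
  pose proof (Rabs_pos u). pose proof (Rabs_pos v).
  assert (hp : u * v + D < sqrt (u ^ 2 + D) * sqrt (v ^ 2 + D)).
  { rewrite <- sqrt_mult_alt by lra.
    apply Rle_lt_trans with (Rabs (u * v + D)). apply Rle_abs.
    rewrite <- (sqrt_pow2 (Rabs (u * v + D))) by apply Rabs_pos.
    rewrite pow2_abs. apply sqrt_lt_1_alt. split. apply pow2_ge_0.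
    assert (0 < (u - v) ^ 2). apply pow2_gt_0. lra.
    replace ((u ^ 2 + D) * (v ^ 2 + D)) with ((u * v + D) ^ 2 + D * (u - v) ^ 2) by ring.
    nra. }
  assert (0 < t * (1 - t)) by nra.
  assert (0 < t * (1 - t) * (sqrt (u ^ 2 + D) * sqrt (v ^ 2 + D) - u * v - D)) by nra.
  apply sqrt_lt_of.
  - pose proof (pow2_ge_0 (t * u + (1 - t) * v)). lra.
  - assert (0 < t * sqrt (u ^ 2 + D)) by (apply Rmult_lt_0_compat; lra).
    assert (0 < (1 - t) * sqrt (v ^ 2 + D)) by (apply Rmult_lt_0_compat; lra). lra.
  - assert (t ^ 2 * (sqrt (u ^ 2 + D) * sqrt (u ^ 2 + D)) = t ^ 2 * (u ^ 2 + D)) by (rewrite Su2; ring).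
    assert ((1 - t) ^ 2 * (sqrt (v ^ 2 + D) * sqrt (v ^ 2 + D)) = (1 - t) ^ 2 * (v ^ 2 + D)) by (rewrite Sv2; ring).
    lra.
Qed.

Theorem lemma1 (n : nat) (a b : R) (hn : (2 < n)%nat) (hb : b <> 0) :
  (* (a) *)
  (strictly_convex (fun c => lam_plus n a b c) /\
   strictly_concave (fun c => lam_minus n a b c)) /\
  (* (b) *)
  ((forall c, lam_minus n a b c < lam_sep a c /\ lam_sep a c < lam_plus n a b c) /\
   asymptote_at (fun c => lam_plus n a b c) (fun c => lam_sep a c) p_infty /\
   asymptote_at (fun c => lam_minus n a b c) (fun c => lam_sep a c) m_infty) /\
  (* (c) *)
  (asymptote_at (fun c => lam_plus n a b c) (fun c => - INR n * c) m_infty /\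
   asymptote_at (fun c => lam_minus n a b c) (fun c => - INR n * c) p_infty).
Proof.
  assert (hN : 2 < INR n) by (replace 2 with (INR 2) by (simpl; ring); apply lt_INR; exact hn).
  assert (hD : 0 < 4 * INR n * b ^ 2) by (pose proof (pow2_gt_0 b hb); nra).
  assert (hk : 0 < INR n + 1) by lra.
  assert (hs1 : Rabs (/ 2) <= 1) by (rewrite Rabs_pos_eq; lra).
  assert (hs2 : Rabs (- / 2) <= 1) by (rewrite Rabs_Ropp, Rabs_pos_eq; lra).
  assert (hconv : forall x y t, x <> y -> 0 < t < 1 ->
    sqrt ((2 * a + (INR n + 1) * (t * x + (1 - t) * y)) ^ 2 + 4 * INR n * b ^ 2)
    < t * sqrt ((2 * a + (INR n + 1) * x) ^ 2 + 4 * INR n * b ^ 2)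
      + (1 - t) * sqrt ((2 * a + (INR n + 1) * y) ^ 2 + 4 * INR n * b ^ 2)).
  { intros x y t hxy ht.
    replace (2 * a + (INR n + 1) * (t * x + (1 - t) * y)) with
      (t * (2 * a + (INR n + 1) * x) + (1 - t) * (2 * a + (INR n + 1) * y)) by ring.
    apply sq_convex; auto. intro E. apply hxy. nra. }
  split; [split|split; [split; [|split]|split]].
  - intros x y t hxy ht. unfold lam_plus. specialize (hconv x y t hxy ht). lra.
  - intros x y t hxy ht. unfold lam_minus. specialize (hconv x y t hxy ht). lra.
  - intros c. unfold lam_minus, lam_plus, lam_sep.
    pose proof (sqrt_gt_abs (2 * a + (INR n + 1) * c) _ hD).
    pose proof (Rle_abs (2 * a + (INR n + 1) * c)).
    pose proof (Rle_abs (- (2 * a + (INR n + 1) * c))). rewrite Rabs_Ropp in H1.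
    lra.
  - apply (lim_pinf _ (INR n + 1) (2 * a) (4 * INR n * b ^ 2) (/ 2)); auto.
    intros c. unfold lam_plus, lam_sep. lra.
  - apply (lim_minf _ (INR n + 1) (2 * a) (4 * INR n * b ^ 2) (- / 2)); auto.
    intros c. unfold lam_minus, lam_sep. lra.
  - apply (lim_minf _ (INR n + 1) (2 * a) (4 * INR n * b ^ 2) (/ 2)); auto.
    intros c. unfold lam_plus. lra.
  - apply (lim_pinf _ (INR n + 1) (2 * a) (4 * INR n * b ^ 2) (- / 2)); auto.
    intros c. unfold lam_minus. lra.
Qed.
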